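(* In the setting of the context, with $d=[G:H]$, the degree of the Kanev correspondence is $$\deg\overline K_w=1-d\,((w,w)+1).$$
   Context: $G$ finite group, $\Lambda$ absolutely irreducible $\mathbb Z[G]$-module of finite rank, $W=\Lambda\otimes\mathbb Q$, $w$ a weight ($gw-w\in\Lambda$ for all $g$), $(\,,\,)$ the negative definite $G$-invariant symmetric bilinear form on $W$ with (i) $(w,\lambda)\in\mathbb Z$ for all $\lambda\in\Lambda$ and (ii) every $G$-invariant symmetric form satisfying (i) is an integer multiple of it; $H=\mathrm{Stab}_G(w)$. $\pi:X\to\mathbb P^1$ Galois covering with group $G$, $C=X/H$, $\psi:C\to\mathbb P^1$. Kanev correspondence: $U$ = complement of the branch locus of $\psi$, $\xi_0\in U$, points of $\psi^{-1}(\xi_0)$ labelled by $Gw$ via a fixed $G$-equivariant bijection; for $\xi\in U$ a path $\gamma_\xi$ in $U$ to $\xi_0$ defines $\mu:\psi^{-1}(\xi)\to Gw$ (endpoint of the lift starting at $c$); $\overline K_w$ is the closure in $C\times C$ of the divisor given over $U$ by $\overline K_w(c)=\sum_{v\in Gw,\,v\ne\mu(c)}[(\mu(c),v)-(w,w)-1]\mu^{-1}(v)$. The degree of a correspondence $D$ is the degree of the divisor $D(c)$. *)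

(* Defs.v *)
From mathcomp Require Import all_boot all_order all_algebra all_fingroup.
From mathcomp Require Import mxrepresentation.
Set Implicit Arguments. Unset Strict Implicit. Unset Printing Implicit Defensive.
Import Order.TTheory GRing.Theory Num.Theory.
Local Open Scope ring_scope.

(* Lattice Lambda = Z^n inside W = Q^n (row vectors); G acts on the right by
   v |-> v *m rG g.  Bilinear forms are given by their Gram matrices. *)

Definition intmx (m n : nat) (A : 'M[rat]_(m, n)) : Prop :=
  forall i j, A i j \is a Num.int.

Definition bform (n : nat) (B : 'M[rat]_n) (x y : 'rV[rat]_n) : rat :=
  (x *m B *m y^T) 0 0.

Definition sym_gram (n : nat) (B : 'M[rat]_n) : Prop := B^T = B.

Definition invariant_form (gT : finGroupType) (G : {group gT}) (n : nat)
  (rG : mx_representation rat G n) (B : 'M[rat]_n) : Prop :=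
  forall g, g \in G -> rG g *m B *m (rG g)^T = B.

Definition neg_definite (n : nat) (B : 'M[rat]_n) : Prop :=
  forall x : 'rV[rat]_n, x != 0 -> bform B x x < 0.

Definition is_weight (gT : finGroupType) (G : {group gT}) (n : nat)
  (rG : mx_representation rat G n) (w : 'rV[rat]_n) : Prop :=
  forall g, g \in G -> intmx (w *m rG g - w).

Definition integral_on_weight (n : nat) (B : 'M[rat]_n) (w : 'rV[rat]_n) : Prop :=
  forall lam : 'rV[rat]_n, intmx lam -> bform B w lam \is a Num.int.

Definition orbit_w (gT : finGroupType) (G : {group gT}) (n : nat)
  (rG : mx_representation rat G n) (w : 'rV[rat]_n) : seq 'rV[rat]_n :=
  undup [seq w *m rG g | g <- enum G].

Definition stab_w (gT : finGroupType) (G : {group gT}) (n : nat)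
  (rG : mx_representation rat G n) (w : 'rV[rat]_n) : {set gT} :=
  [set g in G | w *m rG g == w].

(* coefficient of mu^{-1}(v) in the Kanev divisor K_w(c), where u = mu(c) *)
Definition kanev_coeff (n : nat) (B : 'M[rat]_n) (w u v : 'rV[rat]_n) : rat :=
  if v == u then 0 else bform B u v - bform B w w - 1.

(* degree of the divisor K_w(c) = sum_{v in Gw, v <> mu(c)} coeff * [mu^{-1}(v)],
   the points mu^{-1}(v) being pairwise distinct (mu is a bijection onto Gw). *)
Definition kanev_degree (gT : finGroupType) (G : {group gT}) (n : nat)
  (rG : mx_representation rat G n) (B : 'M[rat]_n) (w u : 'rV[rat]_n) : rat :=
  \sum_(v <- orbit_w rG w) kanev_coeff B w u v.

(* Main.v *)
Require Import Defs.
From mathcomp Require Import all_boot all_order all_algebra all_fingroup.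
From mathcomp Require Import mxrepresentation.
From mathcomp Require Import ring.
Import Order.TTheory GRing.Theory Num.Theory.
Local Open Scope ring_scope.

Lemma undup_map_size (T U V : eqType) (f : T -> U) (g : T -> V) (s : seq T) :
  {in s &, forall x y, (f x == f y) = (g x == g y)} ->
  size (undup (map f s)) = size (undup (map g s)).
Proof.
elim: s => [|x s IH] Hs //=.
have IH' : size (undup (map f s)) = size (undup (map g s)).
  by apply: IH => a b Ha Hb; apply: Hs; rewrite inE ?Ha ?Hb orbT.
have -> : (f x \in map f s) = (g x \in map g s).
  apply/mapP/mapP => -[y ys e]; exists y => //; apply/eqP;
    [rewrite -Hs | rewrite Hs]; rewrite ?inE ?eqxx ?ys ?orbT //; exact/eqP.
by case: ifP => _ //=; rewrite IH'.
Qed.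

Lemma card_seq_undup (T : finType) (s : seq T) : #|s| = size (undup s).
Proof.
rewrite -(eq_card (mem_undup s)); apply/card_uniqP; exact: undup_uniq.
Qed.

Section S.
Variables (gT : finGroupType) (G : {group gT}) (n : nat)
  (rG : mx_representation rat G n) (w : 'rV[rat]_n).

Lemma memH x z : x \in G ->
  (z \in (stab_w rG w :* x)%g) = (z \in G) && (w *m rG z == w *m rG x).
Proof.
move=> xG; rewrite mem_rcoset inE groupMr ?groupV //.
case zG: (z \in G) => //=.
rewrite repr_mxM ?groupV // repr_mxV // mulmxA.
have U := repr_mx_unit rG xG.
apply/eqP/eqP => [e|e].
  by rewrite -[in LHS](mulmxKV U (w *m rG z)) e.
by rewrite e mulmxK.
Qed.

Lemma size_orbit : size (orbit_w rG w) = #|G : stab_w rG w|%g.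
Proof.
rewrite /indexg /rcosets imset_card card_seq_undup /orbit_w /image_mem.
apply: undup_map_size => x y; rewrite !mem_enum => xG yG.
rewrite !rcosetE; apply/eqP/eqP => [e|e].
  by apply/setP => z; rewrite !memH // e.
have : x \in (stab_w rG w :* x)%g by rewrite memH // xG eqxx.
by rewrite e memH // => /andP[_ /eqP].
Qed.

Lemma fixed_zero (s : 'rV[rat]_n) :
  mx_irreducible rG -> (exists2 g, g \in G & rG g != 1%:M) ->
  (forall g, g \in G -> s *m rG g = s) -> s = 0.
Proof.
move=> [_ _ Hs] [g gG ng] Hfix; apply/eqP; apply: contraNT ng => s0.
have mod : mxmodule rG <<s>>%MS.
  rewrite (eqmx_module _ (genmxE s)); apply/mxmoduleP => x xG.
  by rewrite Hfix.
have : (1%:M <= <<s>>)%MS.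
  apply: Hs => //; [exact: submx1 | by rewrite -mxrank_eq0 genmxE mxrank_eq0].
rewrite genmxE => /submxP[D eD].
by rewrite -[rG g]mul1mx eD -mulmxA Hfix.
Qed.

Lemma orbit_mem v : v \in orbit_w rG w -> exists2 h, h \in G & v = w *m rG h.
Proof. by rewrite mem_undup => /mapP[h]; rewrite mem_enum => hG ->; exists h. Qed.

Lemma orbit_sum_fixed g : g \in G ->
  (\sum_(v <- orbit_w rG w) v) *m rG g = \sum_(v <- orbit_w rG w) v.
Proof.
move=> gG; rewrite mulmx_suml.
rewrite -(big_map (fun v => v *m rG g) xpredT id).
apply: perm_big.
have U : uniq [seq v *m rG g | v <- orbit_w rG w].
  rewrite map_inj_uniq ?undup_uniq //.
  by apply: (can_inj (g := fun v => v *m invmx (rG g))) => v; rewrite mulmxK ?repr_mx_unit.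
apply: uniq_perm => //; first exact: undup_uniq.
suff [S1 S2] : {subset [seq v *m rG g | v <- orbit_w rG w] <= orbit_w rG w}
  /\ (size (orbit_w rG w) <= size [seq v *m rG g | v <- orbit_w rG w])%N.
  exact: (uniq_min_size U S1 S2).2.
split.
- move=> v /mapP[u /orbit_mem[h hG ->] ->].
  rewrite -mulmxA -repr_mxM // mem_undup; apply/mapP; exists (h * g)%g => //.
  by rewrite mem_enum groupM.
- by rewrite size_map.
Qed.
End S.

Lemma bform_sumr (n : nat) (B : 'M[rat]_n) (u : 'rV[rat]_n) (s : seq 'rV[rat]_n) :
  bform B u (\sum_(v <- s) v) = \sum_(v <- s) bform B u v.
Proof.
elim: s => [|x s IH]; first by rewrite !big_nil /bform trmx0 mulmx0 mxE.
by rewrite !big_cons -IH /bform raddfD /= mulmxDr mxE.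
Qed.

Theorem corollary3p8 (gT : finGroupType) (G : {group gT}) (n : nat)
  (rG : mx_representation rat G n)
  (* Lambda = Z^n is a Z[G]-module *)
  (HLam : forall g, g \in G -> intmx (rG g))
  (* Lambda is absolutely irreducible *)
  (Habs : mx_absolutely_irreducible rG)
  (* Lambda is not the trivial module (see NOTES.md) *)
  (Hnontriv : exists2 g, g \in G & rG g != 1%:M)
  (w : 'rV[rat]_n) (Hw : is_weight rG w)
  (B : 'M[rat]_n)
  (HBsym : sym_gram B) (HBinv : invariant_form rG B)
  (HBneg : neg_definite B)
  (HBi : integral_on_weight B w)
  (HBii : forall B' : 'M[rat]_n, sym_gram B' -> invariant_form rG B' ->
            integral_on_weight B' w -> exists k : int, B' = k%:~R *: B)
  (u : 'rV[rat]_n) (Hu : u \in orbit_w rG w) :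
  kanev_degree rG B w u
    = 1 - (#|G : stab_w rG w|%g)%:R * (bform B w w + 1).
Proof.
have [h hG eu] := @orbit_mem _ _ _ rG w u Hu.
have uu : bform B u u = bform B w w.
  rewrite eu /bform trmx_mul -!mulmxA (mulmxA (rG h)) (mulmxA (rG h *m B)).
  by rewrite HBinv.
have s0 : \sum_(v <- orbit_w rG w) v = 0.
  apply: (@fixed_zero _ _ _ rG _ (mx_abs_irrW Habs) Hnontriv) => g gG.
  exact: (@orbit_sum_fixed _ _ _ rG w g gG).
have E1 := @bform_sumr n B u (orbit_w rG w).
rewrite s0 (bigD1_seq u Hu (undup_uniq _)) /= uu in E1.
have E0 : bform B u 0 = 0 by rewrite /bform trmx0 mulmx0 mxE.
rewrite E0 in E1.
set c := bform B w w + 1.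
have E2 : \sum_(v <- orbit_w rG w) c = c *+ size (orbit_w rG w).
  by rewrite big_const_seq count_predT iter_addr_0.
rewrite (bigD1_seq u Hu (undup_uniq _)) /= in E2.
rewrite -(@size_orbit _ _ _ rG w) /kanev_degree (bigD1_seq u Hu (undup_uniq _)) /=.
rewrite /kanev_coeff eqxx add0r.
rewrite (eq_bigr (fun v => bform B u v - c)); last first.
  by move=> v /negbTE ->; rewrite /c opprD addrA.
rewrite sumrB.
have -> : \sum_(i <- orbit_w rG w | i != u) bform B u i = - bform B w w.
  by apply/eqP; rewrite -addr_eq0 addrC -E1.
have -> : \sum_(i <- orbit_w rG w | i != u) c = c *+ size (orbit_w rG w) - c.
  by rewrite -E2 addrC addrK.
rewrite /c; ring.
Qed.
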